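(* Let $\kappa=\frac4{27}$ and let $a,b,c,d>0$. Then the recurrence coefficients defined in the context satisfy $\beta_n=3\kappa$, $\alpha_{n+1}=3\kappa^2$ and $\gamma_{n+1}=\kappa^3$ for all integers $n\ge1$ (i.e. the Jacobi matrix coincides with the banded Toeplitz matrix with diagonals $1,3\kappa,3\kappa^2,\kappa^3$ except possibly in its first column) if and only if $(a,b,c,d)$ is one of the twelve tuples $(\frac13,\frac23,\frac12,1)$, $(\frac23,\frac13,\frac12,1)$, $(\frac13,\frac23,1,\frac32)$, $(\frac23,\frac13,1,\frac32)$, $(\frac23,\frac43,1,\frac32)$, $(\frac43,\frac23,1,\frac32)$, $(\frac23,\frac43,\frac32,2)$, $(\frac43,\frac23,\frac32,2)$, $(\frac43,\frac53,\frac32,2)$, $(\frac53,\frac43,\frac32,2)$, $(\frac43,\frac53,2,\frac52)$, $(\frac53,\frac43,2,\frac52)$.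
   Context: Let $c_{-1}=c$ and for $k\ge0$ $c_{2k}=d+k$, $c_{2k+1}=c+k+1$. Put $\lambda_0=\lambda_1=0$, and for $n\ge1$: $\lambda_{3n}=\frac{n(b+n-1)(c_n-a-1)}{(c_n+n-2)(c_n+n-1)(c_{n-1}+n-1)}$, $\lambda_{3n+1}=\frac{n(a+n)(c_{n-1}-b)}{(c_n+n-1)(c_{n-1}+n-1)(c_{n-1}+n)}$; for $n\ge0$: $\lambda_{3n+2}=\frac{(a+n)(b+n)(c_n-1)}{(c_n+n-1)(c_n+n)(c_{n-1}+n)}$. For $n\ge0$: $\beta_n=\lambda_{3n}+\lambda_{3n+1}+\lambda_{3n+2}$, $\alpha_{n+1}=(\lambda_{3n+1}+\lambda_{3n+2})\lambda_{3n+3}+\lambda_{3n+2}\lambda_{3n+4}$, $\gamma_{n+1}=\lambda_{3n+2}\lambda_{3n+4}\lambda_{3n+6}$. These are the entries of the Jacobi matrix $J$ ($J_{n,n+1}=1$, $J_{n,n}=\beta_n$, $J_{n+1,n}=\alpha_{n+1}$, $J_{n+2,n}=\gamma_{n+1}$) of the hypergeometric multiple orthogonal polynomials with parameters $(a,b,c,d)$. *)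

(* Defs.v *)
From Stdlib Require Import Reals Lra Lia Arith.
Open Scope R_scope.

Definition cseq (c d : R) (n : nat) : R :=
  if Nat.even n then d + INR (Nat.div2 n) else c + INR (Nat.div2 n) + 1.

(* cprev c d n = c_{n-1}, with c_{-1} = c. *)
Definition cprev (c d : R) (n : nat) : R :=
  match n with
  | O => c
  | S m => cseq c d m
  end.

Definition lam (a b c d : R) (k : nat) : R :=
  let n := (k / 3)%nat in
  let N := INR n in
  let cn := cseq c d n in
  let cp := cprev c d n in
  match (k mod 3)%nat with
  | O => if Nat.eqb n 0 then 0
         else N * (b + N - 1) * (cn - a - 1)
              / ((cn + N - 2) * (cn + N - 1) * (cp + N - 1))
  | 1%nat => if Nat.eqb n 0 then 0
         else N * (a + N) * (cp - b)
              / ((cn + N - 1) * (cp + N - 1) * (cp + N))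
  | _ => (a + N) * (b + N) * (cn - 1)
              / ((cn + N - 1) * (cn + N) * (cp + N))
  end.

Definition beta (a b c d : R) (n : nat) : R :=
  lam a b c d (3 * n) + lam a b c d (3 * n + 1) + lam a b c d (3 * n + 2).

(* alphaS n = alpha_{n+1} *)
Definition alphaS (a b c d : R) (n : nat) : R :=
  (lam a b c d (3 * n + 1) + lam a b c d (3 * n + 2)) * lam a b c d (3 * n + 3)
  + lam a b c d (3 * n + 2) * lam a b c d (3 * n + 4).

(* gammaS n = gamma_{n+1} *)
Definition gammaS (a b c d : R) (n : nat) : R :=
  lam a b c d (3 * n + 2) * lam a b c d (3 * n + 4) * lam a b c d (3 * n + 6).

Definition kappa : R := 4 / 27.

(* Main.v *)
Require Import Defs.
From Stdlib Require Import Reals Lra Lia Arith.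
Open Scope R_scope.

Lemma div3 n r : (r < 3)%nat -> ((3*n+r)/3 = n)%nat /\ ((3*n+r) mod 3 = r)%nat.
Proof. intros. split. symmetry; apply (Nat.div_unique _ 3 _ r); lia. symmetry; apply (Nat.mod_unique _ 3 n r); lia. Qed.
Definition L0 (a b N cn cp : R) := N * (b + N - 1) * (cn - a - 1) / ((cn + N - 2) * (cn + N - 1) * (cp + N - 1)).
Definition L1 (a b N cn cp : R) := N * (a + N) * (cp - b) / ((cn + N - 1) * (cp + N - 1) * (cp + N)).
Definition L2 (a b N cn cp : R) := (a + N) * (b + N) * (cn - 1) / ((cn + N - 1) * (cn + N) * (cp + N)).
Lemma lam0 a b c d n : (1 <= n)%nat -> lam a b c d (3*n) = L0 a b (INR n) (cseq c d n) (cprev c d n).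
Proof. intros. unfold lam. destruct (div3 n 0 ltac:(lia)) as [h1 h2]. rewrite Nat.add_0_r in h1,h2. rewrite h1, h2.
  destruct n; [lia|reflexivity]. Qed.
Lemma lam1 a b c d n : (1 <= n)%nat -> lam a b c d (3*n+1) = L1 a b (INR n) (cseq c d n) (cprev c d n).
Proof. intros. unfold lam. destruct (div3 n 1 ltac:(lia)) as [h1 h2]. rewrite h1, h2.
  destruct n; [lia|reflexivity]. Qed.
Lemma lam2 a b c d n : lam a b c d (3*n+2) = L2 a b (INR n) (cseq c d n) (cprev c d n).
Proof. intros. unfold lam. destruct (div3 n 2 ltac:(lia)) as [h1 h2]. rewrite h1, h2. reflexivity. Qed.
Lemma cseq_ev c d j : cseq c d (2*j) = d + INR j.
Proof. unfold cseq. rewrite Nat.even_mul. simpl. replace (j+(j+0))%nat with (2*j)%nat by lia. rewrite Nat.div2_double. reflexivity. Qed.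
Lemma cseq_od c d j : cseq c d (2*j+1) = c + INR j + 1.
Proof. unfold cseq. replace (2*j+1)%nat with (S (2*j)) by lia.
  replace (Nat.even (S (2*j))) with false by (rewrite Nat.even_succ, Nat.odd_mul; reflexivity).
  rewrite Nat.div2_succ_double. reflexivity. Qed.
Lemma INR2 : INR 2 = 2.
Proof. simpl. ring. Qed.
Lemma beta_L a b c d n : (1 <= n)%nat -> beta a b c d n =
  L0 a b (INR n) (cseq c d n) (cprev c d n) + L1 a b (INR n) (cseq c d n) (cprev c d n) + L2 a b (INR n) (cseq c d n) (cprev c d n).
Proof. intros. unfold beta. rewrite lam0, lam1, lam2 by lia. reflexivity. Qed.
Lemma alpha_L a b c d n : (1 <= n)%nat -> alphaS a b c d n =
  (L1 a b (INR n) (cseq c d n) (cprev c d n) + L2 a b (INR n) (cseq c d n) (cprev c d n)) * L0 a b (INR (n+1)) (cseq c d (n+1)) (cseq c d n)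
  + L2 a b (INR n) (cseq c d n) (cprev c d n) * L1 a b (INR (n+1)) (cseq c d (n+1)) (cseq c d n).
Proof. intros. unfold alphaS. rewrite lam1, lam2 by lia.
  replace (3*n+3)%nat with (3*(n+1))%nat by lia. replace (3*n+4)%nat with (3*(n+1)+1)%nat by lia.
  rewrite lam0, lam1 by lia. replace (cprev c d (n+1)) with (cseq c d n). reflexivity.
  rewrite Nat.add_1_r. reflexivity. Qed.
Lemma gamma_L a b c d n : (1 <= n)%nat -> gammaS a b c d n =
  L2 a b (INR n) (cseq c d n) (cprev c d n) * L1 a b (INR (n+1)) (cseq c d (n+1)) (cseq c d n)
  * L0 a b (INR (n+2)) (cseq c d (n+2)) (cseq c d (n+1)).
Proof. intros. unfold gammaS. rewrite lam2.
  replace (3*n+4)%nat with (3*(n+1)+1)%nat by lia. replace (3*n+6)%nat with (3*(n+2))%nat by lia.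
  rewrite lam0, lam1 by lia. replace (cprev c d (n+1)) with (cseq c d n).
  replace (cprev c d (n+2)) with (cseq c d (n+1)). reflexivity.
  replace (n+2)%nat with (S (n+1)) by lia. reflexivity.
  rewrite Nat.add_1_r. reflexivity. Qed.

Definition BE a b c d x := L0 a b (2*x) (d+x) (c+x) + L1 a b (2*x) (d+x) (c+x) + L2 a b (2*x) (d+x) (c+x).
Definition AE a b c d x := (L1 a b (2*x) (d+x) (c+x) + L2 a b (2*x) (d+x) (c+x)) * L0 a b (2*x+1) (c+x+1) (d+x)
  + L2 a b (2*x) (d+x) (c+x) * L1 a b (2*x+1) (c+x+1) (d+x).
Definition GE a b c d x := L2 a b (2*x) (d+x) (c+x) * L1 a b (2*x+1) (c+x+1) (d+x) * L0 a b (2*x+2) (d+x+1) (c+x+1).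
Definition BO a b c d y := L0 a b (2*y+1) (c+y+1) (d+y) + L1 a b (2*y+1) (c+y+1) (d+y) + L2 a b (2*y+1) (c+y+1) (d+y).
Definition AO a b c d y := (L1 a b (2*y+1) (c+y+1) (d+y) + L2 a b (2*y+1) (c+y+1) (d+y)) * L0 a b (2*y+2) (d+y+1) (c+y+1)
  + L2 a b (2*y+1) (c+y+1) (d+y) * L1 a b (2*y+2) (d+y+1) (c+y+1).
Definition GO a b c d y := L2 a b (2*y+1) (c+y+1) (d+y) * L1 a b (2*y+2) (d+y+1) (c+y+1) * L0 a b (2*y+3) (c+y+2) (d+y+1).

Lemma even_eqs a b c d k : let x := INR (S k) in
  beta a b c d (2*S k) = BE a b c d x /\ alphaS a b c d (2*S k) = AE a b c d x /\ gammaS a b c d (2*S k) = GE a b c d x.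
Proof. intro x.
  assert (e1 : INR (2*S k) = 2*x) by (rewrite mult_INR, INR2; reflexivity).
  assert (e2 : INR (2*S k+1) = 2*x+1) by (rewrite plus_INR, mult_INR, INR2; reflexivity).
  assert (e3 : INR (2*S k+2) = 2*x+2) by (replace (2*S k+2)%nat with (2*S (S k))%nat by lia; rewrite mult_INR, (S_INR (S k)), INR2; unfold x; ring).
  assert (f1 : cseq c d (2*S k) = d + x) by apply cseq_ev.
  assert (f2 : cprev c d (2*S k) = c + x).
  { replace (2*S k)%nat with (S (2*k+1)) by lia. change (cprev c d (S (2*k+1))) with (cseq c d (2*k+1)). rewrite cseq_od. unfold x. rewrite S_INR. ring. }
  assert (f3 : cseq c d (2*S k+1) = c + x + 1) by apply cseq_od.
  assert (f4 : cseq c d (2*S k+2) = d + x + 1).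
  { replace (2*S k+2)%nat with (2*S (S k))%nat by lia. rewrite cseq_ev, (S_INR (S k)). unfold x; ring. }
  rewrite beta_L, alpha_L, gamma_L by lia. rewrite e1, e2, e3, f1, f2, f3, f4.
  unfold BE, AE, GE. repeat split.
Qed.

Lemma odd_eqs a b c d k : let y := INR k in
  beta a b c d (2*k+1) = BO a b c d y /\ alphaS a b c d (2*k+1) = AO a b c d y /\ gammaS a b c d (2*k+1) = GO a b c d y.
Proof. intro y.
  assert (e1 : INR (2*k+1) = 2*y+1) by (rewrite plus_INR, mult_INR, INR2; reflexivity).
  assert (e2 : INR (2*k+1+1) = 2*y+2) by (rewrite !plus_INR, mult_INR, INR2; unfold y; simpl (INR 1); try rewrite INR2; ring).
  assert (e3 : INR (2*k+1+2) = 2*y+3) by (rewrite !plus_INR, mult_INR, INR2; unfold y; simpl (INR 1); try rewrite INR2; ring).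
  assert (f1 : cseq c d (2*k+1) = c + y + 1) by apply cseq_od.
  assert (f2 : cprev c d (2*k+1) = d + y).
  { replace (2*k+1)%nat with (S (2*k)) by lia. change (cprev c d (S (2*k))) with (cseq c d (2*k)). rewrite cseq_ev. reflexivity. }
  assert (f3 : cseq c d (2*k+1+1) = d + y + 1).
  { replace (2*k+1+1)%nat with (2*S k)%nat by lia. rewrite cseq_ev, S_INR. unfold y; ring. }
  assert (f4 : cseq c d (2*k+1+2) = c + y + 2).
  { replace (2*k+1+2)%nat with (2*S k+1)%nat by lia. rewrite cseq_od, S_INR. unfold y. ring. }
  rewrite beta_L, alpha_L, gamma_L by lia. rewrite e1, e2, e3, f1, f2, f3, f4.
  unfold BO, AO, GO. repeat split.
Qed.
Definition CB0 (a b c d : R) : R := (1)*a*b*c^3*d^4 + (-5)*a*b*c^3*d^3 + (9)*a*b*c^3*d^2 + (-7)*a*b*c^3*d + (2)*a*b*c^3 + (-2)*a*b*c^2*d^4 + (10)*a*b*c^2*d^3 + (-18)*a*b*c^2*d^2 + (14)*a*b*c^2*d + (-4)*a*b*c^2 + (1)*a*b*c*d^4 + (-5)*a*b*c*d^3 + (9)*a*b*c*d^2 + (-7)*a*b*c*d + (2)*a*b*c + (-4/9)*c^4*d^5 + (20/9)*c^4*d^4 + (-4)*c^4*d^3 + (28/9)*c^4*d^2 + (-8/9)*c^4*d + (8/9)*c^3*d^5 + (-40/9)*c^3*d^4 + (8)*c^3*d^3 + (-56/9)*c^3*d^2 + (16/9)*c^3*d + (-4/9)*c^2*d^5 + (20/9)*c^2*d^4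 + (-4)*c^2*d^3 + (28/9)*c^2*d^2 + (-8/9)*c^2*d.
Definition CB1 (a b c d : R) : R := (8)*a*b*c^3*d^3 + (-33)*a*b*c^3*d^2 + (42)*a*b*c^3*d + (-17)*a*b*c^3 + (7)*a*b*c^2*d^4 + (-55)*a*b*c^2*d^3 + (141)*a*b*c^2*d^2 + (-145)*a*b*c^2*d + (52)*a*b*c^2 + (-10)*a*b*c*d^4 + (62)*a*b*c*d^3 + (-135)*a*b*c*d^2 + (124)*a*b*c*d + (-41)*a*b*c + (3)*a*b*d^4 + (-15)*a*b*d^3 + (27)*a*b*d^2 + (-21)*a*b*d + (6)*a*b + (4)*a*c^3*d^4 + (-16)*a*c^3*d^3 + (24)*a*c^3*d^2 + (-16)*a*c^3*d + (4)*a*c^3 + (-6)*a*c^2*d^4 + (26)*a*c^2*d^3 + (-42)*a*c^2*d^2 + (30)*a*c^2*d + (-8)*a*c^2 + (2)*a*c*d^4 + (-10)*a*c*d^3 + (18)*a*c*d^2 + (-14)*a*c*d + (4)*a*c + (4)*b*c^3*d^4 + (-16)*b*c^3*d^3 + (24)*b*c^3*d^2 + (-16)*b*c^3*d + (4)*b*c^3 + (-6)*b*c^2*d^4 + (26)*b*c^2*d^3 + (-42)*b*c^2*d^2 + (30)*b*c^2*d + (-8)*b*c^2 + (2)*b*c*d^4 + (-10)*b*c*d^3 + (18)*b*c*d^2 + (-14)*b*c*d + (4)*b*c + (-20/3)*c^4*d^4 + (80/3)*c^4*d^3 + (-36)*c^4*d^2 + (56/3)*c^4*d + (-8/3)*c^4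 + (-16/3)*c^3*d^5 + (38)*c^3*d^4 + (-286/3)*c^3*d^3 + (310/3)*c^3*d^2 + (-46)*c^3*d + (16/3)*c^3 + (8)*c^2*d^5 + (-134/3)*c^2*d^4 + (278/3)*c^2*d^3 + (-86)*c^2*d^2 + (98/3)*c^2*d + (-8/3)*c^2 + (-8/3)*c*d^5 + (40/3)*c*d^4 + (-24)*c*d^3 + (56/3)*c*d^2 + (-16/3)*c*d.
Definition CB2 (a b c d : R) : R := (18)*a*b*c^3*d^2 + (-63)*a*b*c^3*d + (45)*a*b*c^3 + (48)*a*b*c^2*d^3 + (-279)*a*b*c^2*d^2 + (468)*a*b*c^2*d + (-237)*a*b*c^2 + (15)*a*b*c*d^4 + (-171)*a*b*c*d^3 + (567)*a*b*c*d^2 + (-708)*a*b*c*d + (297)*a*b*c + (-12)*a*b*d^4 + (96)*a*b*d^3 + (-243)*a*b*d^2 + (246)*a*b*d + (-87)*a*b + (40)*a*c^3*d^3 + (-120)*a*c^3*d^2 + (120)*a*c^3*d + (-40)*a*c^3 + (32)*a*c^2*d^4 + (-188)*a*c^2*d^3 + (390)*a*c^2*d^2 + (-344)*a*c^2*d + (110)*a*c^2 + (-32)*a*c*d^4 + (160)*a*c*d^3 + (-306)*a*c*d^2 + (260)*a*c*d + (-82)*a*c + (6)*a*d^4 + (-30)*a*d^3 + (54)*a*d^2 + (-42)*a*d + (12)*a + (40)*b*c^3*d^3 + (-120)*b*c^3*d^2 + (120)*b*c^3*d + (-40)*b*c^3 + (32)*b*c^2*d^4 + (-188)*b*c^2*d^3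 + (390)*b*c^2*d^2 + (-344)*b*c^2*d + (110)*b*c^2 + (-32)*b*c*d^4 + (160)*b*c*d^3 + (-306)*b*c*d^2 + (260)*b*c*d + (-82)*b*c + (6)*b*d^4 + (-30)*b*d^3 + (54)*b*d^2 + (-42)*b*d + (12)*b + (-40)*c^4*d^3 + (120)*c^4*d^2 + (-108)*c^4*d + (28)*c^4 + (-68)*c^3*d^4 + (332)*c^3*d^3 + (-558)*c^3*d^2 + (368)*c^3*d + (-74)*c^3 + (-24)*c^2*d^5 + (206)*c^2*d^4 + (-594)*c^2*d^3 + (732)*c^2*d^2 + (-374)*c^2*d + (54)*c^2 + (24)*c*d^5 + (-144)*c*d^4 + (320)*c*d^3 + (-312)*c*d^2 + (120)*c*d + (-8)*c + (-4)*d^5 + (20)*d^4 + (-36)*d^3 + (28)*d^2 + (-8)*d.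
Definition CB3 (a b c d : R) : R := (-27)*a*b*c^3 + (54)*a*b*c^2*d^2 + (-405)*a*b*c^2*d + (405)*a*b*c^2 + (72)*a*b*c*d^3 + (-675)*a*b*c*d^2 + (1512)*a*b*c*d + (-936)*a*b*c + (9)*a*b*d^4 + (-153)*a*b*d^3 + (675)*a*b*d^2 + (-1008)*a*b*d + (477)*a*b + (144)*a*c^3*d^2 + (-288)*a*c^3*d + (144)*a*c^3 + (312)*a*c^2*d^3 + (-1152)*a*c^2*d^2 + (1422)*a*c^2*d + (-582)*a*c^2 + (84)*a*c*d^4 + (-648)*a*c*d^3 + (1620)*a*c*d^2 + (-1686)*a*c*d + (630)*a*c + (-42)*a*d^4 + (246)*a*d^3 + (-540)*a*d^2 + (510)*a*d + (-174)*a + (144)*b*c^3*d^2 + (-288)*b*c^3*d + (144)*b*c^3 + (312)*b*c^2*d^3 + (-1152)*b*c^2*d^2 + (1422)*b*c^2*d + (-582)*b*c^2 + (84)*b*c*d^4 + (-648)*b*c*d^3 + (1620)*b*c*d^2 + (-1686)*b*c*d + (630)*b*c + (-42)*b*d^4 + (246)*b*d^3 + (-540)*b*d^2 + (510)*b*d + (-174)*b + (-120)*c^4*d^2 + (240)*c^4*d + (-108)*c^4 + (-352)*c^3*d^3 + (1224)*c^3*d^2 + (-1302)*c^3*d + (406)*c^3 + (-260)*c^2*d^4 + (1412)*c^2*d^3 + (-2634)*c^2*d^2 + (1910)*c^2*d + (-416)*c^2 + (-48)*c*d^5 + (458)*c*d^4 + (-1414)*c*d^3 + (1830)*c*d^2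 + (-938)*c*d + (112)*c + (24)*d^5 + (-150)*d^4 + (342)*d^3 + (-330)*d^2 + (114)*d.
Definition CB4 (a b c d : R) : R := (-27)*a*b*c^3 + (-216)*a*b*c^2*d + (-27)*a*b*c^2 + (-162)*a*b*c*d^2 + (-513)*a*b*c*d + (1026)*a*b*c + (-405)*a*b*d^2 + (1458)*a*b*d + (-1134)*a*b + (216)*a*c^3*d + (-216)*a*c^3 + (1080)*a*c^2*d^2 + (-2484)*a*c^2*d + (1458)*a*c^2 + (792)*a*c*d^3 + (-3456)*a*c*d^2 + (4968)*a*c*d + (-2358)*a*c + (72)*a*d^4 + (-684)*a*d^3 + (1998)*a*d^2 + (-2394)*a*d + (1008)*a + (216)*b*c^3*d + (-216)*b*c^3 + (1080)*b*c^2*d^2 + (-2484)*b*c^2*d + (1458)*b*c^2 + (792)*b*c*d^3 + (-3456)*b*c*d^2 + (4968)*b*c*d + (-2358)*b*c + (72)*b*d^4 + (-684)*b*d^3 + (1998)*b*d^2 + (-2394)*b*d + (1008)*b + (-180)*c^4*d + (180)*c^4 + (-936)*c^3*d^2 + (2124)*c^3*d + (-1098)*c^3 + (-1104)*c^2*d^3 + (4176)*c^2*d^2 + (-4842)*c^2*d + (1608)*c^2 + (-444)*c*d^4 + (2484)*c*d^3 + (-4770)*c*d^2 + (3432)*c*d + (-630)*c + (-36)*d^5 + (366)*d^4 + (-1146)*d^3 + (1440)*d^2 + (-618)*d + (-6).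
Definition CB5 (a b c d : R) : R := (-405)*a*b*c^2 + (-1296)*a*b*c*d + (729)*a*b*c + (-486)*a*b*d^2 + (405)*a*b*d + (648)*a*b + (108)*a*c^3 + (1512)*a*c^2*d + (-1674)*a*c^2 + (2592)*a*c*d^2 + (-6696)*a*c*d + (4482)*a*c + (648)*a*d^3 + (-3240)*a*d^2 + (5346)*a*d + (-2916)*a + (108)*b*c^3 + (1512)*b*c^2*d + (-1674)*b*c^2 + (2592)*b*c*d^2 + (-6696)*b*c*d + (4482)*b*c + (648)*b*d^3 + (-3240)*b*d^2 + (5346)*b*d + (-2916)*b + (-108)*c^4 + (-1296)*c^3*d + (1458)*c^3 + (-2376)*c^2*d^2 + (5940)*c^2*d + (-3348)*c^2 + (-1440)*c*d^3 + (5400)*c*d^2 + (-6210)*c*d + (1818)*c + (-288)*d^4 + (1548)*d^3 + (-2754)*d^2 + (1530)*d + (72).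
Definition CB6 (a b c d : R) : R := (-1701)*a*b*c + (-1944)*a*b*d + (1701)*a*b + (648)*a*c^2 + (3240)*a*c*d + (-3888)*a*c + (1944)*a*d^2 + (-5508)*a*d + (4212)*a + (648)*b*c^2 + (3240)*b*c*d + (-3888)*b*c + (1944)*b*d^2 + (-5508)*b*d + (4212)*b + (-756)*c^3 + (-2808)*c^2*d + (3618)*c^2 + (-1944)*c*d^2 + (5076)*c*d + (-2862)*c + (-648)*d^3 + (1944)*d^2 + (-1458)*d + (-324).
Definition CB7 (a b c d : R) : R := (-2187)*a*b + (972)*a*c + (1944)*a*d + (-2430)*a + (972)*b*c + (1944)*b*d + (-2430)*b + (-1620)*c^2 + (-1296)*c*d + (2430)*c + (-324)*d + (648).
Definition CB8 (a b c d : R) : R := (-972)*c + (972)*d + (-486).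
Definition CG0 (a b c d : R) : R := (2)*a^3*b^3*d + (-2)*a^3*b^3 + (-2)*a^3*b^2*d^2 + (4)*a^3*b^2*d + (-2)*a^3*b^2 + (-2)*a^3*b*d^2 + (2)*a^3*b*d + (-2)*a^2*b^3*d^2 + (4)*a^2*b^3*d + (-2)*a^2*b^3 + (2)*a^2*b^2*d^3 + (-6)*a^2*b^2*d^2 + (6)*a^2*b^2*d + (-2)*a^2*b^2 + (2)*a^2*b*d^3 + (-4)*a^2*b*d^2 + (2)*a^2*b*d + (-2)*a*b^3*d^2 + (2)*a*b^3*d + (2)*a*b^2*d^3 + (-4)*a*b^2*d^2 + (2)*a*b^2*d + (2)*a*b*d^3 + (-2)*a*b*d^2 + (-64/19683)*c^3*d^6 + (-64/6561)*c^3*d^5 + (-64/19683)*c^3*d^4 + (64/6561)*c^3*d^3 + (128/19683)*c^3*d^2 + (-64/6561)*c^2*d^6 + (-64/2187)*c^2*d^5 + (-64/6561)*c^2*d^4 + (64/2187)*c^2*d^3 + (128/6561)*c^2*d^2 + (-128/19683)*c*d^6 + (-128/6561)*c*d^5 + (-128/19683)*c*d^4 + (128/6561)*c*d^3 + (256/19683)*c*d^2.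
Definition CG1 (a b c d : R) : R := (6)*a^3*b^3*d + (-4)*a^3*b^3 + (-6)*a^3*b^2*d^2 + (16)*a^3*b^2*d + (-10)*a^3*b^2 + (-14)*a^3*b*d^2 + (14)*a^3*b*d + (-2)*a^3*b + (-4)*a^3*d^2 + (4)*a^3*d + (-6)*a^2*b^3*d^2 + (16)*a^2*b^3*d + (-10)*a^2*b^3 + (6)*a^2*b^2*d^3 + (-28)*a^2*b^2*d^2 + (38)*a^2*b^2*d + (-16)*a^2*b^2 + (14)*a^2*b*d^3 + (-34)*a^2*b*d^2 + (22)*a^2*b*d + (-2)*a^2*b + (4)*a^2*d^3 + (-8)*a^2*d^2 + (4)*a^2*d + (-14)*a*b^3*d^2 + (14)*a*b^3*d + (-2)*a*b^3 + (14)*a*b^2*d^3 + (-34)*a*b^2*d^2 + (22)*a*b^2*d + (-2)*a*b^2 + (22)*a*b*d^3 + (-24)*a*b*d^2 + (4)*a*b*d + (4)*a*d^3 + (-4)*a*d^2 + (-4)*b^3*d^2 + (4)*b^3*d + (4)*b^2*d^3 + (-8)*b^2*d^2 + (4)*b^2*d + (4)*b*d^3 + (-4)*b*d^2 + (-128/2187)*c^3*d^5 + (-320/2187)*c^3*d^4 + (-256/6561)*c^3*d^3 + (64/729)*c^3*d^2 + (256/6561)*c^3*d + (-64/2187)*c^2*d^6 + (-64/243)*c^2*d^5 + (-1024/2187)*c^2*d^4 + (-64/2187)*c^2*d^3 + (704/2187)*c^2*d^2 + (256/2187)*c^2*d + (-128/2187)*c*d^6 + (-640/2187)*c*d^5 +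 (-256/729)*c*d^4 + (640/6561)*c*d^3 + (640/2187)*c*d^2 + (512/6561)*c*d + (-128/6561)*d^6 + (-128/2187)*d^5 + (-128/6561)*d^4 + (128/2187)*d^3 + (256/6561)*d^2.
Definition CG2 (a b c d : R) : R := (4)*a^3*b^3*d + (2)*a^3*b^3 + (-4)*a^3*b^2*d^2 + (20)*a^3*b^2*d + (-10)*a^3*b^2 + (-28)*a^3*b*d^2 + (20)*a^3*b*d + (-4)*a^3*b + (-20)*a^3*d^2 + (12)*a^3*d + (4)*a^3 + (-4)*a^2*b^3*d^2 + (20)*a^2*b^3*d + (-10)*a^2*b^3 + (4)*a^2*b^2*d^3 + (-42)*a^2*b^2*d^2 + (78)*a^2*b^2*d + (-40)*a^2*b^2 + (28)*a^2*b*d^3 + (-90)*a^2*b*d^2 + (66)*a^2*b*d + (-10)*a^2*b + (20)*a^2*d^3 + (-44)*a^2*d^2 + (20)*a^2*d + (4)*a^2 + (-28)*a*b^3*d^2 + (20)*a*b^3*d + (-4)*a*b^3 + (28)*a*b^2*d^3 + (-90)*a*b^2*d^2 + (66)*a*b^2*d + (-10)*a*b^2 + (84)*a*b*d^3 + (-90)*a*b*d^2 + (26)*a*b*d + (-2)*a*b + (36)*a*d^3 + (-32)*a*d^2 + (-20)*b^3*d^2 + (12)*b^3*d + (4)*b^3 + (20)*b^2*d^3 + (-44)*b^2*d^2 + (20)*b^2*d + (4)*b^2 + (36)*b*d^3 + (-32)*b*d^2 + (-320/729)*c^3*d^4 + (-640/729)*c^3*d^3 + (-128/729)*c^3*d^2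 + (64/243)*c^3*d + (128/2187)*c^3 + (-128/243)*c^2*d^5 + (-640/243)*c^2*d^4 + (-2176/729)*c^2*d^3 + (64/243)*c^2*d^2 + (832/729)*c^2*d + (128/729)*c^2 + (-64/729)*c*d^6 + (-320/243)*c*d^5 + (-2624/729)*c*d^4 + (-1600/729)*c*d^3 + (1024/729)*c*d^2 + (896/729)*c*d + (256/2187)*c + (-64/729)*d^6 + (-448/729)*d^5 + (-704/729)*d^4 + (17560/2187)*d^3 + (-5320/729)*d^2 + (512/2187)*d.
Definition CG3 (a b c d : R) : R := (4)*a^3*b^3 + (8)*a^3*b^2*d + (10)*a^3*b^2 + (-16)*a^3*b*d^2 + (-8)*a^3*b*d + (2)*a^3*b + (-32)*a^3*d^2 + (-8)*a^3*d + (16)*a^3 + (8)*a^2*b^3*d + (10)*a^2*b^3 + (-20)*a^2*b^2*d^2 + (58)*a^2*b^2*d + (-20)*a^2*b^2 + (16)*a^2*b*d^3 + (-92)*a^2*b*d^2 + (50)*a^2*b*d + (-10)*a^2*b + (32)*a^2*d^3 + (-84)*a^2*d^2 + (12)*a^2*d + (28)*a^2 + (-16)*a*b^3*d^2 + (-8)*a*b^3*d + (2)*a*b^3 + (16)*a*b^2*d^3 + (-92)*a*b^2*d^2 + (50)*a*b^2*d + (-10)*a*b^2 + (128)*a*b*d^3 + (-100)*a*b*d^2 + (34)*a*b*d + (-4)*a*b + (112)*a*d^3 + (-60)*a*d^2 + (-20)*a*d + (4)*a + (-32)*b^3*d^2 + (-8)*b^3*d + (16)*b^3 + (32)*b^2*d^3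 + (-84)*b^2*d^2 + (12)*b^2*d + (28)*b^2 + (112)*b*d^3 + (-60)*b*d^2 + (-20)*b*d + (4)*b + (-1280/729)*c^3*d^3 + (-640/243)*c^3*d^2 + (-256/729)*c^3*d + (64/243)*c^3 + (-320/81)*c^2*d^4 + (-3200/243)*c^2*d^3 + (-256/27)*c^2*d^2 + (320/243)*c^2*d + (320/243)*c^2 + (-128/81)*c*d^5 + (-320/27)*c*d^4 + (-14848/729)*c*d^3 + (-1472/243)*c*d^2 + (3712/729)*c*d + (128/81)*c + (-64/729)*d^6 + (-448/243)*d^5 + (-4864/729)*d^4 + (12136/243)*d^3 + (-22240/729)*d^2 + (-3248/243)*d + (256/729).
Definition CG4 (a b c d : R) : R := (12)*a^3*b^2 + (-16)*a^3*b*d + (4)*a^3*b + (-16)*a^3*d^2 + (-48)*a^3*d + (12)*a^3 + (12)*a^2*b^3 + (12)*a^2*b^2*d + (42)*a^2*b^2 + (-32)*a^2*b*d^2 + (-44)*a^2*b*d + (10)*a^2*b + (16)*a^2*d^3 + (-64)*a^2*d^2 + (-84)*a^2*d + (60)*a^2 + (-16)*a*b^3*d + (4)*a*b^3 + (-32)*a*b^2*d^2 + (-44)*a*b^2*d + (10)*a*b^2 + (64)*a*b*d^3 + (32)*a*b*d^2 + (-20)*a*b*d + (2)*a*b + (144)*a*d^3 + (48)*a*d^2 + (-84)*a*d + (16)*a + (-16)*b^3*d^2 + (-48)*b^3*d + (12)*b^3 + (16)*b^2*d^3 + (-64)*b^2*d^2 + (-84)*b^2*d + (60)*b^2 + (144)*b*d^3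 + (48)*b*d^2 + (-84)*b*d + (16)*b + (-320/81)*c^3*d^2 + (-320/81)*c^3*d + (-64/243)*c^3 + (-1280/81)*c^2*d^3 + (-320/9)*c^2*d^2 + (-1216/81)*c^2*d + (128/81)*c^2 + (-320/27)*c*d^4 + (-4480/81)*c*d^3 + (-4864/81)*c*d^2 + (-64/9)*c*d + (1408/243)*c + (-128/81)*d^5 + (-1280/81)*d^4 + (26416/243)*d^3 + (472/81)*d^2 + (-19912/243)*d + (-392/81).
Definition CG5 (a b c d : R) : R := (-32)*a^3*d + (-16)*a^3 + (36)*a^2*b^2 + (-48)*a^2*b*d + (12)*a^2*b + (-16)*a^2*d^2 + (-160)*a^2*d + (20)*a^2 + (-48)*a*b^2*d + (12)*a*b^2 + (64)*a*b*d^2 + (-32)*a*b*d + (4)*a*b + (64)*a*d^3 + (208)*a*d^2 + (-80)*a*d + (12)*a + (-32)*b^3*d + (-16)*b^3 + (-16)*b^2*d^2 + (-160)*b^2*d + (20)*b^2 + (64)*b*d^3 + (208)*b*d^2 + (-80)*b*d + (12)*b + (-128/27)*c^3*d + (-64/27)*c^3 + (-320/9)*c^2*d^2 + (-448/9)*c^2*d + (-256/27)*c^2 + (-1280/27)*c*d^3 + (-1280/9)*c*d^2 + (-2432/27)*c*d + (-64/27)*c + (-320/27)*d^4 + (800/9)*d^3 + (1552/9)*d^2 + (-3944/27)*d + (-368/9).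
Definition CG6 (a b c d : R) : R := (-16)*a^3 + (-80)*a^2*d + (-64)*a^2 + (128)*a*d^2 + (48)*a*d + (-16)*a + (-16)*b^3 + (-80)*b^2*d + (-64)*b^2 + (128)*b*d^2 + (48)*b*d + (-16)*b + (-64/27)*c^3 + (-128/3)*c^2*d + (-256/9)*c^2 + (-320/3)*c*d^2 + (-192)*c*d + (-1472/27)*c + (448/27)*d^3 + (2144/9)*d^2 + (-880/27)*d + (-920/9).
Definition CG7 (a b c d : R) : R := (-48)*a^2 + (64)*a*d + (-16)*a + (-48)*b^2 + (64)*b*d + (-16)*b + (-64/3)*c^2 + (-128)*c*d + (-320/3)*c + (256/3)*d^2 + (352/3)*d + (-304/3).
Definition CG8 (a b c d : R) : R := (-64)*c + (64)*d + (-32).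
Definition PB (a b c d x : R) : R := CB0 a b c d + CB1 a b c d * x^1 + CB2 a b c d * x^2 + CB3 a b c d * x^3 + CB4 a b c d * x^4 + CB5 a b c d * x^5 + CB6 a b c d * x^6 + CB7 a b c d * x^7 + CB8 a b c d * x^8.
Definition PG (a b c d x : R) : R := CG0 a b c d + CG1 a b c d * x^1 + CG2 a b c d * x^2 + CG3 a b c d * x^3 + CG4 a b c d * x^4 + CG5 a b c d * x^5 + CG6 a b c d * x^6 + CG7 a b c d * x^7 + CG8 a b c d * x^8.
Lemma CB8_eq a b c d : CB8 a b c d = (972) * (d - c - 1/2).
Proof. unfold CB8. field. Qed.
Lemma T_eq a b c : (a+b-2*c)*(a+b-2*c+1) = (-2/2187) * CB7 a b c (c+1/2) + (-1/48) * CG7 a b c (c+1/2).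
Proof. unfold CB7, CG7. field. Qed.
Lemma quad1 a c : CB7 a (2*c - a) c (c+1/2) = (2187) * ((1)*a^2 + (-2)*a*c + (4/3)*c^2 + (-2/3)*c + (2/9)).
Proof. unfold CB7. field. Qed.
Lemma cub1 a c : CB6 a (2*c - a) c (c+1/2) = ((3645)*c + (-729)) * ((1)*a^2 + (-2)*a*c + (4/3)*c^2 + (-2/3)*c + (2/9)) + (648) * ((c - (1/2))*(c - (1))*(c - (3/2))).
Proof. unfold CB6. field. Qed.
Lemma quad2 a c : CB7 a (2*c - 1 - a) c (c+1/2) = (2187) * ((1)*a^2 + (-2)*a*c + (1)*a + (4/3)*c^2 + (-2)*c + (8/9)).
Proof. unfold CB7. field. Qed.
Lemma cub2 a c : CB6 a (2*c - 1 - a) c (c+1/2) = ((3645)*c + (-729)) * ((1)*a^2 + (-2)*a*c + (1)*a + (4/3)*c^2 + (-2)*c + (8/9)) + (648) * ((c - (1))*(c - (3/2))*(c - (2))).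
Proof. unfold CB6. field. Qed.
Ltac nz := repeat split; try (intro; lra).
Definition DB (a b c d x : R) : R :=
  (((d+x)+2*x-2)*((d+x)+2*x-1)*((c+x)+2*x-1)) * (((d+x)+2*x-1)*((c+x)+2*x-1)*((c+x)+2*x))
  * (((d+x)+2*x-1)*((d+x)+2*x)*((c+x)+2*x)).
Definition DG (a b c d x : R) : R :=
  (((d+x)+2*x-1)*((d+x)+2*x)*((c+x)+2*x)) * (((c+x+1)+(2*x+1)-1)*((d+x)+(2*x+1)-1)*((d+x)+(2*x+1)))
  * (((d+x+1)+(2*x+2)-2)*((d+x+1)+(2*x+2)-1)*((c+x+1)+(2*x+2)-1)).
Lemma PB_ok a b c d x : 0 < c -> 0 < d -> 1 <= x -> BE a b c d x = 3*kappa -> PB a b c d x = 0.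
Proof. intros hc hd hx H.
  assert (E : PB a b c d x = (BE a b c d x - 3*kappa) * DB a b c d x).
  { unfold PB, CB0, CB1, CB2, CB3, CB4, CB5, CB6, CB7, CB8, BE, DB, L0, L1, L2, kappa. field. nz. }
  rewrite E, H. ring. Qed.
Lemma PG_ok a b c d x : 0 < c -> 0 < d -> 1 <= x -> GE a b c d x = kappa^3 -> PG a b c d x = 0.
Proof. intros hc hd hx H.
  assert (E : PG a b c d x = (GE a b c d x - kappa^3) * DG a b c d x).
  { unfold PG, CG0, CG1, CG2, CG3, CG4, CG5, CG6, CG7, CG8, GE, DG, L0, L1, L2, kappa. field. nz. }
  rewrite E, H. ring. Qed.
Lemma vander (C0 C1 C2 C3 C4 C5 C6 C7 C8 : R) :
  (forall k : nat, C0 + C1 * INR (S k)^1 + C2 * INR (S k)^2 + C3 * INR (S k)^3 + C4 * INR (S k)^4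
     + C5 * INR (S k)^5 + C6 * INR (S k)^6 + C7 * INR (S k)^7 + C8 * INR (S k)^8 = 0) ->
  C6 = 0 /\ C7 = 0 /\ C8 = 0.
Proof. intro H.
  pose proof (H 0%nat) as h1. pose proof (H 1%nat) as h2. pose proof (H 2%nat) as h3.
  pose proof (H 3%nat) as h4. pose proof (H 4%nat) as h5. pose proof (H 5%nat) as h6.
  pose proof (H 6%nat) as h7. pose proof (H 7%nat) as h8. pose proof (H 8%nat) as h9.
  simpl INR in *. repeat split; lra. Qed.

Lemma quad_eq (a b c d a' b' c' d' : R) : a = a' -> b = b' -> c = c' -> d = d' -> (a, b, c, d) = (a', b', c', d').
Proof. intros; subst; reflexivity. Qed.

Ltac pick := first [ left; apply quad_eq; lra | right; pick | apply quad_eq; lra ].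

Lemma forward a b c d (ha : 0 < a) (hb : 0 < b) (hc : 0 < c) (hd : 0 < d) :
  (forall n : nat, (1 <= n)%nat ->
      beta a b c d n = 3 * kappa /\
      alphaS a b c d n = 3 * kappa ^ 2 /\
      gammaS a b c d n = kappa ^ 3) ->
  ( (a, b, c, d) = (1/3, 2/3, 1/2, 1)
 \/ (a, b, c, d) = (2/3, 1/3, 1/2, 1)
 \/ (a, b, c, d) = (1/3, 2/3, 1, 3/2)
 \/ (a, b, c, d) = (2/3, 1/3, 1, 3/2)
 \/ (a, b, c, d) = (2/3, 4/3, 1, 3/2)
 \/ (a, b, c, d) = (4/3, 2/3, 1, 3/2)
 \/ (a, b, c, d) = (2/3, 4/3, 3/2, 2)
 \/ (a, b, c, d) = (4/3, 2/3, 3/2, 2)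
 \/ (a, b, c, d) = (4/3, 5/3, 3/2, 2)
 \/ (a, b, c, d) = (5/3, 4/3, 3/2, 2)
 \/ (a, b, c, d) = (4/3, 5/3, 2, 5/2)
 \/ (a, b, c, d) = (5/3, 4/3, 2, 5/2) ).
Proof. intro H.
  assert (HB : forall k, PB a b c d (INR (S k)) = 0).
  { intro k. destruct (H (2 * S k)%nat ltac:(lia)) as [h1 [_ h3]].
    destruct (even_eqs a b c d k) as [e1 [_ e3]]. apply PB_ok; auto.
    rewrite S_INR; pose proof (pos_INR k); lra. rewrite <- e1; exact h1. }
  assert (HG : forall k, PG a b c d (INR (S k)) = 0).
  { intro k. destruct (H (2 * S k)%nat ltac:(lia)) as [h1 [_ h3]].
    destruct (even_eqs a b c d k) as [e1 [_ e3]]. apply PG_ok; auto.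
    rewrite S_INR; pose proof (pos_INR k); lra. rewrite <- e3; exact h3. }
  destruct (vander _ _ _ _ _ _ _ _ _ HB) as [b6 [b7 b8]].
  destruct (vander _ _ _ _ _ _ _ _ _ HG) as [_ [g7 _]].
  rewrite CB8_eq in b8. assert (Hd : d = c + 1/2) by lra. subst d.
  pose proof (T_eq a b c) as T. rewrite b7, g7 in T.
  assert (T' : (a+b-2*c)*(a+b-2*c+1) = 0) by lra. clear T.
  destruct (Rmult_integral _ _ T') as [hs|hs].
  - assert (Hb : b = 2*c - a) by lra. subst b.
    rewrite quad1 in b7. rewrite cub1 in b6.
    assert (Q : 1*a^2 + -2*a*c + 4/3*c^2 + -2/3*c + 2/9 = 0) by lra.
    rewrite Q in b6.
    assert (Cc : (c - 1/2)*(c - 1)*(c - 3/2) = 0) by lra.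
    destruct (Rmult_integral _ _ Cc) as [C1|C1]; [destruct (Rmult_integral _ _ C1) as [C2|C2]|];
    (assert (Ec : c = 1/2 \/ c = 1 \/ c = 3/2) by lra); clear Cc;
    destruct Ec as [Ec|[Ec|Ec]]; subst c;
    (assert (Qa : (a - 1/3) * (a - 2/3) = 0 \/ (a - 2/3) * (a - 4/3) = 0 \/ (a - 4/3) * (a - 5/3) = 0) by (first [left; lra | right; left; lra | right; right; lra]));
    destruct Qa as [Qa|[Qa|Qa]]; destruct (Rmult_integral _ _ Qa) as [A|A]; pick.
  - assert (Hb : b = 2*c - 1 - a) by lra. subst b.
    rewrite quad2 in b7. rewrite cub2 in b6.
    assert (Q : 1*a^2 + -2*a*c + 1*a + 4/3*c^2 + -2*c + 8/9 = 0) by lra.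
    rewrite Q in b6.
    assert (Cc : (c - 1)*(c - 3/2)*(c - 2) = 0) by lra.
    destruct (Rmult_integral _ _ Cc) as [C1|C1]; [destruct (Rmult_integral _ _ C1) as [C2|C2]|];
    (assert (Ec : c = 1 \/ c = 3/2 \/ c = 2) by lra); clear Cc;
    destruct Ec as [Ec|[Ec|Ec]]; subst c;
    (assert (Qa : (a - 1/3) * (a - 2/3) = 0 \/ (a - 2/3) * (a - 4/3) = 0 \/ (a - 4/3) * (a - 5/3) = 0) by (first [left; lra | right; left; lra | right; right; lra]));
    destruct Qa as [Qa|[Qa|Qa]]; destruct (Rmult_integral _ _ Qa) as [A|A]; pick.
Qed.

Ltac nz2 := repeat split; try (intro; lra).
Ltac back_tuple :=
  intros n hn; match goal with |- beta ?a ?b ?c ?d _ = _ /\ _ =>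
  destruct (Nat.Even_or_Odd n) as [[m hm]|[m hm]]; subst n;
  [ destruct m as [|k]; [lia|];
    destruct (even_eqs a b c d k) as [e1 [e2 e3]]; rewrite e1, e2, e3;
    assert (hx : 1 <= INR (S k)) by (rewrite S_INR; pose proof (pos_INR k); lra);
    generalize (INR (S k)) hx; intros x hx'
  | destruct (odd_eqs a b c d m) as [e1 [e2 e3]]; rewrite e1, e2, e3;
    pose proof (pos_INR m) as hx;
    generalize (INR m) hx; intros x hx' ];
  unfold BE, AE, GE, BO, AO, GO, L0, L1, L2, kappa;
  repeat split; field; nz2 end.

Lemma backward a b c d :
  ( (a, b, c, d) = (1/3, 2/3, 1/2, 1)
 \/ (a, b, c, d) = (2/3, 1/3, 1/2, 1)
 \/ (a, b, c, d) = (1/3, 2/3, 1, 3/2)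
 \/ (a, b, c, d) = (2/3, 1/3, 1, 3/2)
 \/ (a, b, c, d) = (2/3, 4/3, 1, 3/2)
 \/ (a, b, c, d) = (4/3, 2/3, 1, 3/2)
 \/ (a, b, c, d) = (2/3, 4/3, 3/2, 2)
 \/ (a, b, c, d) = (4/3, 2/3, 3/2, 2)
 \/ (a, b, c, d) = (4/3, 5/3, 3/2, 2)
 \/ (a, b, c, d) = (5/3, 4/3, 3/2, 2)
 \/ (a, b, c, d) = (4/3, 5/3, 2, 5/2)
 \/ (a, b, c, d) = (5/3, 4/3, 2, 5/2) ) ->
  (forall n : nat, (1 <= n)%nat ->
      beta a b c d n = 3 * kappa /\
      alphaS a b c d n = 3 * kappa ^ 2 /\
      gammaS a b c d n = kappa ^ 3).
Proof.
  intro HH; repeat destruct HH as [HH|HH]; injection HH as -> -> -> ->; back_tuple.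
Qed.

Theorem theorem13 (a b c d : R) (ha : 0 < a) (hb : 0 < b) (hc : 0 < c) (hd : 0 < d) :
  (forall n : nat, (1 <= n)%nat ->
      beta a b c d n = 3 * kappa /\
      alphaS a b c d n = 3 * kappa ^ 2 /\
      gammaS a b c d n = kappa ^ 3)
  <->
  ( (a, b, c, d) = (1/3, 2/3, 1/2, 1)
 \/ (a, b, c, d) = (2/3, 1/3, 1/2, 1)
 \/ (a, b, c, d) = (1/3, 2/3, 1, 3/2)
 \/ (a, b, c, d) = (2/3, 1/3, 1, 3/2)
 \/ (a, b, c, d) = (2/3, 4/3, 1, 3/2)
 \/ (a, b, c, d) = (4/3, 2/3, 1, 3/2)
 \/ (a, b, c, d) = (2/3, 4/3, 3/2, 2)
 \/ (a, b, c, d) = (4/3, 2/3, 3/2, 2)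
 \/ (a, b, c, d) = (4/3, 5/3, 3/2, 2)
 \/ (a, b, c, d) = (5/3, 4/3, 3/2, 2)
 \/ (a, b, c, d) = (4/3, 5/3, 2, 5/2)
 \/ (a, b, c, d) = (5/3, 4/3, 2, 5/2) ).
Proof.
  split.
  - apply forward; assumption.
  - apply backward.
Qed.
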